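(* Let $R$ be a binary relation on a set $A$ satisfying $\mathbf{WCR}(R)$. Then every $x\in\mathrm{SM}$ is Church–Rosser: for all $b,c\in A$ with $x\to^* b$ and $x\to^* c$ there is $d$ with $b\to^* d$ and $c\to^* d$. (Constructively.)
   Context: Work in constructive (intuitionistic) logic / Martin-Löf type theory without excluded middle or other axioms. Let $R$ be a binary relation on $A$; write $a\to b$ for $R\,a\,b$ and $\to^*$ for its reflexive–transitive closure. $\mathbf{WCR}(R)$: for all $a,b,c$, if $a\to b$ and $a\to c$ then there is $d$ with $b\to^* d$ and $c\to^* d$. $a\in\mathrm{MF}$ iff for all $b$, $a\to^* b$ implies $b\to^* a$. $\mathrm{SM}$ (strongly minimalizing) is defined inductively by two rules: if $a\in\mathrm{MF}$ then $a\in\mathrm{SM}$; and if every $b$ with $a\to b$ is in $\mathrm{SM}$ then $a\in\mathrm{SM}$. *)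

(* Defs.v *)
Set Implicit Arguments.

Section Rel.
Variable A : Type.
Variable R : A -> A -> Prop.

Inductive rtc : A -> A -> Prop :=
| rtc_refl : forall a, rtc a a
| rtc_step : forall a b c, R a b -> rtc b c -> rtc a c.

Definition WCR : Prop :=
  forall a b c, R a b -> R a c -> exists d, rtc b d /\ rtc c d.

Definition MF (a : A) : Prop := forall b, rtc a b -> rtc b a.

Inductive SM : A -> Prop :=
| SM_MF : forall a, MF a -> SM a
| SM_step : forall a, (forall b, R a b -> SM b) -> SM a.

Definition CR_at (x : A) : Prop :=
  forall b c, rtc x b -> rtc x c -> exists d, rtc b d /\ rtc c d.
End Rel.

(* Main.v *)
Require Import Defs.

Lemma rtc_trans (A : Type) (R : A -> A -> Prop) :
  forall a b c, rtc R a b -> rtc R b c -> rtc R a c.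
Proof.
  intros a b c H; induction H; intros; auto.
  eapply rtc_step; eauto.
Qed.

Theorem mainTheorem9 (A : Type) (R : A -> A -> Prop) (Hwcr : WCR R) :
  forall x : A, SM R x ->
  forall b c : A, rtc R x b -> rtc R x c -> exists d : A, rtc R b d /\ rtc R c d.
Proof.
  intros x Hsm; induction Hsm as [x Hmf | x _ IH].
  - intros b c Hb Hc. exists c. split.
    + eapply rtc_trans; [apply Hmf; exact Hb | exact Hc].
    + apply rtc_refl.
  - intros b c Hb Hc.
    destruct Hb as [x | x b1 b Hxb1 Hb1b].
    + exists c; split; [exact Hc | apply rtc_refl].
    + destruct Hc as [x | x c1 c Hxc1 Hc1c].
      * exists b; split; [apply rtc_refl | eapply rtc_step; eauto].
      * destruct (Hwcr _ _ _ Hxb1 Hxc1) as [e [Hb1e Hc1e]].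
        destruct (IH b1 Hxb1 b e Hb1b Hb1e) as [f [Hbf Hef]].
        destruct (IH c1 Hxc1 f c (@rtc_trans A R _ _ _ Hc1e Hef) Hc1c) as [g [Hfg Hcg]].
        exists g; split; [eapply rtc_trans; eauto | exact Hcg].
Qed.
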